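(* Let $0<s_1<1-s_1<s_2<1$. There is $\epsilon_0=\epsilon_0(s_1,s_2)>0$ such that for every $\epsilon\in(0,\epsilon_0)$ for which $m=\epsilon^{-1}/4$ is an integer there is $n_0$ with the following property: if $n\geq n_0$, $H\in Irr(m)$, and $G$ is an $n$-blowup of $H$, then every $\epsilon$-regular partition of $G$ has at least $\epsilon^{-s_2}$ parts.
   Context: Graphs $G=(V,E)$, $E\subseteq\binom V2$. $d_G(X,Y)=|\{(x,y)\in X\times Y:xy\in E\}|/(|X||Y|)$; $(X,Y)$ is $\epsilon$-regular if $|d_G(X,Y)-d_G(X',Y')|\le\epsilon$ for $X'\subseteq X,Y'\subseteq Y$ with $|X'|\ge\epsilon|X|,|Y'|\ge\epsilon|Y|$; a partition $\mathcal P$ of $V$ (not necessarily equitable; pairs $(X,X)$ allowed) is $\epsilon$-regular if at least $(1-\epsilon)|V|^2$ pairs of $V^2$ lie in $X\times Y$ for some $\epsilon$-regular $(X,Y)\in\mathcal P^2$. $Irr(m)$ is the set of graphs on $\{a_1,..,a_m,b_1,..,b_m\}$ ($2m$ distinct vertices) such that either $a_ib_j\in E$ iff $i\le j$ for all $i,j$, or $a_ib_j\in E$ iff $i=j$ for all $i,j$, or $a_ib_j\in E$ iff $i\ne j$ for all $i,j$. For a graph $H=(U,E)$, an $n$-blowup of $H$ is any graph with vertex set $\bigcup_{u\in U}V_u$ (disjoint, $|V_u|=n$) such that for $u\neq u'$, all pairs $xy$ with $x\in V_u,y\in V_{u'}$ are edges if $uu'\in E$ and non-edges if $uu'\notin E$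 (pairs inside a $V_u$ arbitrary). *)

(* Defs.v *)
From HB Require Import structures.
From mathcomp Require Import all_boot all_order all_algebra.
From mathcomp Require Import reals exp.
Set Implicit Arguments. Unset Strict Implicit. Unset Printing Implicit Defensive.
Import Order.TTheory GRing.Theory Num.Theory.
Local Open Scope ring_scope.

Section Graphs.
Variable R : realType.
Variable T : finType.

Definition is_graph (e : rel T) : Prop := symmetric e /\ irreflexive e.

Definition density (e : rel T) (X Y : {set T}) : R :=
  #|[set p in setX X Y | e p.1 p.2]|%:R / (#|X| * #|Y|)%:R.

Definition eps_regular_pair (eps : R) (e : rel T) (X Y : {set T}) : bool :=
  [forall X' : {set T}, forall Y' : {set T},
     [&& X' \subset X, Y' \subset Y, eps * #|X|%:R <= #|X'|%:R
       & eps * #|Y|%:R <= #|Y'|%:R] ==>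
     (`|density e X Y - density e X' Y'| <= eps)].

Definition eps_regular_partition (eps : R) (e : rel T) (P : {set {set T}}) : Prop :=
  partition P [set: T] /\
  (1 - eps) * (#|T| ^ 2)%:R <=
    #|[set p : T * T | [exists X in P, exists Y in P,
          [&& eps_regular_pair eps e X Y, p.1 \in X & p.2 \in Y]]]|%:R.

End Graphs.

(* vertex set {a_1..a_m, b_1..b_m}: a_i = inl i, b_j = inr j (0-indexed) *)
Definition irr_vertex (m : nat) : finType := ('I_m + 'I_m)%type.

Definition in_Irr (m : nat) (H : rel (irr_vertex m)) : Prop :=
  is_graph H /\
  ((forall i j : 'I_m, H (inl i) (inr j) = (i <= j)%N) \/
   (forall i j : 'I_m, H (inl i) (inr j) = (i == j)) \/
   (forall i j : 'I_m, H (inl i) (inr j) = (i != j))).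

(* G (on vertex set T) is an n-blowup of H (on U), the parts being the fibres
   V_u = f^-1(u), each of size n; pairs inside a fibre are arbitrary. *)
Definition is_blowup (U T : finType) (n : nat) (H : rel U) (G : rel T) (f : T -> U) : Prop :=
  (forall u : U, #|[set x | f x == u]| = n) /\
  (forall x y : T, f x != f y -> G x y = H (f x) (f y)).

(* Main.v *)
Require Import Defs.
From HB Require Import structures.
From mathcomp Require Import all_boot all_order all_algebra.
From mathcomp Require Import reals exp.
From mathcomp Require Import ring lra zify.
Import Order.TTheory GRing.Theory Num.Theory.
Local Open Scope ring_scope.

Section Core.
Variables (R : realType) (m n : nat) (T : finType) (H : rel (irr_vertex m))
  (G : rel T) (f : T -> irr_vertex m) (P : {set {set T}}) (eps : R).
Hypothesis eps_gt0 : 0 < eps.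
Hypothesis eps_lt : 2 * eps < 1.
Hypothesis eps_m : eps * (4 * m%:R) = 1.
Hypothesis n_gt0 : (0 < n)%N.
Hypothesis HIrr : in_Irr H.
Hypothesis Hbl : is_blowup n H G f.
Hypothesis Hpart : partition P [set: T].

Definition fib u := [set x | f x == u].
Definition w (X : {set T}) u : R := #|X :&: fib u|%:R.
Definition heavy (X : {set T}) u := eps * #|X|%:R <= w X u.
Definition IX (X : {set T}) := [set i : 'I_m | heavy X (inl i)].
Definition hA (X : {set T}) := \sum_(i in IX X) w X (inl i).
Definition reg (X Y : {set T}) := eps_regular_pair eps G X Y.



Lemma card_setI_sum (X F : {set T}) : #|X :&: F| = (\sum_(x in X) (x \in F : nat))%N.
Proof.
rewrite -sum1_card [RHS]big_mkcond /= [LHS]big_mkcond /=; apply: eq_bigr => x _.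
by rewrite inE; case: (x \in X); case: (x \in F).
Qed.

Lemma sum_fib (X : {set T}) : (\sum_(u : irr_vertex m) #|X :&: fib u|)%N = #|X|.
Proof.
rewrite -sum1_card (partition_big f xpredT) //=.
apply: eq_bigr => u _; rewrite -sum1_card; apply: eq_bigl => x.
by rewrite !inE.
Qed.

Lemma fib_card u : #|fib u| = n.
Proof. by case: Hbl => h _; rewrite -(h u). Qed.

Lemma card_T : #|T| = (2 * m * n)%N.
Proof.
have := sum_fib [set: T]; under eq_bigr do rewrite setTI fib_card.
rewrite cardsT => <-; rewrite sum_nat_const card_sum card_ord; lia.
Qed.

Lemma sumB_le (X : {set T}) : (\sum_(j : 'I_m) #|X :&: fib (inr j)| <= #|X|)%N.
Proof. by rewrite -[X in (_ <= X)%N]sum_fib big_sumType /= leq_addl. Qed.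

Lemma sumA_le (X : {set T}) : (\sum_(j : 'I_m) #|X :&: fib (inl j)| <= #|X|)%N.
Proof. by rewrite -[X in (_ <= X)%N]sum_fib big_sumType /= leq_addr. Qed.

Lemma cover_T : cover P = [set: T].
Proof. by case/and3P: Hpart => /eqP. Qed.

Lemma part_sum (F : {set T}) : (\sum_(X in P) #|X :&: F|)%N = #|F|.
Proof.
under eq_bigr do rewrite card_setI_sum.
have /= <- := (@set_partition_big _ _ 0%N addn P _ (fun x => nat_of_bool (x \in F)) Hpart).
rewrite -sum1_card big_mkcond /= [RHS]big_mkcond /=; apply: eq_bigr => x _.
by rewrite !inE; case: (x \in F).
Qed.

Lemma eps_T : eps * #|T|%:R = n%:R / 2.
Proof.
rewrite card_T !natrM.
transitivity (eps * (4 * m%:R) * n%:R / 2); last by rewrite eps_m mul1r.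
by field.
Qed.

Lemma heavy_mass u : n%:R / 2 <= \sum_(X in P | heavy X u) w X u.
Proof.
have e : n%:R = \sum_(X in P) w X u by rewrite /w -natr_sum part_sum fib_card.
rewrite (bigID (fun X => heavy X u)) /= in e.
have : \sum_(X in P | ~~ heavy X u) w X u <= eps * #|T|%:R.
  apply: (@le_trans _ _ (\sum_(X in P | ~~ heavy X u) eps * #|X|%:R)).
    apply: ler_sum => X /andP[_ hX]; rewrite /heavy -ltNge in hX; exact: ltW.
  rewrite -mulr_sumr ler_pM2l //.
  have -> : #|T|%:R = \sum_(X in P) #|X|%:R :> R.
    by rewrite -natr_sum -(card_partition Hpart) cardsT.
  rewrite [X in _ <= X](bigID (fun X => heavy X u)) /= lerDr.
  by apply: sumr_ge0 => X _; apply: ler0n.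
rewrite eps_T; lra.
Qed.

Lemma dens_fib (X1 Y1 : {set T}) u v : u != v -> X1 \subset fib u -> Y1 \subset fib v ->
  (0 < #|X1|)%N -> (0 < #|Y1|)%N -> @density R T G X1 Y1 = (H u v)%:R.
Proof.
move=> uv sX sY X0 Y0; rewrite /density.
have hG : forall p, p \in setX X1 Y1 -> G p.1 p.2 = H u v.
  move=> [x y] /setXP [hx hy] /=.
  have fx : f x = u by move/subsetP: sX => /(_ x hx); rewrite inE => /eqP.
  have fy : f y = v by move/subsetP: sY => /(_ y hy); rewrite inE => /eqP.
  by case: Hbl => _ ->; rewrite ?fx ?fy.
case hH : (H u v).
  have -> : [set p in setX X1 Y1 | G p.1 p.2] = setX X1 Y1.
    apply/setP => p; rewrite [in LHS]inE; case pin: (p \in setX X1 Y1) => //=.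
    by rewrite hG.
  rewrite cardsX natrM divff //.
  by rewrite mulf_neq0 // pnatr_eq0 -lt0n.
have -> : [set p in setX X1 Y1 | G p.1 p.2] = set0.
  apply/setP => p; rewrite in_set0 [in LHS]inE; case pin: (p \in setX X1 Y1) => //=.
  by rewrite hG // hH.
by rewrite cards0 mul0r.
Qed.

Lemma conflict X Y i i' j : X \in P -> Y \in P -> heavy X (inl i) -> heavy X (inl i') ->
  heavy Y (inr j) -> H (inl i) (inr j) != H (inl i') (inr j) -> ~~ reg X Y.
Proof.
move=> XP YP hi hi' hj hne; apply/negP => hreg.
have gt0 (Z : {set T}) : Z \in P -> (0 < #|Z|)%N.
  move=> ZP; case/and3P: Hpart => _ _ P0; rewrite card_gt0.
  by apply: contraNneq P0 => Z0; rewrite -Z0.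
have pos (Z : {set T}) u : Z \in P -> heavy Z u -> (0 < #|Z :&: fib u|)%N.
  move=> ZP hZ; rewrite -(ltr0n R); apply: lt_le_trans hZ.
  by apply: mulr_gt0 => //; rewrite ltr0n gt0.
have test u : heavy X (inl u) -> `|@density R T G X Y - (H (inl u) (inr j))%:R| <= eps.
  move=> hu; rewrite -(@dens_fib (X :&: fib (inl u)) (Y :&: fib (inr j))) //;
    rewrite ?subsetIr ?pos //.
  move: hreg => /forallP/(_ (X :&: fib (inl u)))/forallP/(_ (Y :&: fib (inr j)))/implyP.
  by apply; rewrite !subsetIl /=; apply/andP; split.
move: (test _ hi) (test _ hi') hne.
case: (H (inl i) (inr j)); case: (H (inl i') (inr j)) => //= ; rewrite !ler_norml => /andP[a1 a2] /andP[b1 b2] _; move: a1 a2 b1 b2; rewrite ?mulr1n ?mulr0n; have := eps_lt; clear test hreg; lra.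
Qed.

Lemma keyH (j r : 'I_m) : (j < r)%N -> H (inl j) (inr j) != H (inl r) (inr j).
Proof.
move=> jr; have rj : r != j by apply/eqP => e; move: jr; rewrite e ltnn.
case: HIrr => _ [h|[h|h]]; rewrite !h.
- by rewrite leqnn leqNgt jr.
- by rewrite eqxx (negbTE rj).
- by rewrite eqxx rj.
Qed.

Lemma perX X : X \in P ->
  (#|IX X|%:R - 1) * (n%:R / 2) <= \sum_(Y in P | ~~ reg X Y) (#|Y|%:R : R).
Proof.
move=> XP.
have S0 : 0 <= \sum_(Y in P | ~~ reg X Y) #|Y|%:R :> R.
  by apply: sumr_ge0 => *; apply: ler0n.
have [I0|[i0 Hi0]] := set_0Vmem (IX X).
  rewrite I0 cards0; have := ler0n R n; lra.
case: (@arg_maxnP _ i0 (fun i => i \in IX X) (fun i : 'I_m => nat_of_ord i) Hi0) => r rin rmax.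
rewrite (cardsD1 r (IX X)) rin /= natrD addrAC subrr add0r.
have -> : #|IX X :\ r|%:R * (n%:R / 2) = \sum_(j in IX X :\ r) (n%:R / 2 : R).
  by rewrite sumr_const mulr_natl.
apply: (@le_trans _ _ (\sum_(j in IX X :\ r) \sum_(Y in P | heavy Y (inr j)) w Y (inr j))).
  by apply: ler_sum => j _; exact: heavy_mass.
rewrite (exchange_big_dep (fun Y => Y \in P)) /=; last by move=> j Y _ /andP[].
rewrite [X in _ <= X]big_mkcondr /=; apply: ler_sum => Y YP.
case: (boolP (reg X Y)) => hr /=.
  rewrite big1 // => j /andP [/setD1P [jr jI] /andP [_ hY]].
  exfalso; move: hr; apply/negP.
  apply: (@conflict X Y j r j XP YP) => //.
  - by move: jI; rewrite inE.
  - by move: rin; rewrite inE.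
  - apply: keyH; rewrite ltn_neqAle; apply/andP; split; [exact: jr | exact: (rmax j jI)].
apply: (@le_trans _ _ (\sum_(j : 'I_m) w Y (inr j))).
  rewrite big_mkcond /=; apply: ler_sum => j _; case: ifP => _ //.
by rewrite /w -natr_sum ler_nat; exact: sumB_le.
Qed.

Lemma triv_P : trivIset P.
Proof. by case/and3P: Hpart. Qed.

Lemma sumT_part (F : T -> nat) : (\sum_x F x = \sum_(X in P) \sum_(x in X) F x)%N.
Proof.
have /= <- := @set_partition_big _ _ 0%N addn P _ F Hpart.
by apply: eq_bigl => x; rewrite inE.
Qed.

Lemma pair_count (Q : {set T} -> {set T} -> bool) :
  #|[set p : T * T | Q (pblock P p.1) (pblock P p.2)]| =
  (\sum_(X in P) \sum_(Y in P | Q X Y) #|X| * #|Y|)%N.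
Proof.
rewrite -sum1_card big_mkcond /=.
transitivity (\sum_(x : T) \sum_(y : T) (if Q (pblock P x) (pblock P y) then 1 else 0))%N.
  by rewrite pair_bigA; apply: eq_bigr => p _; rewrite inE.
rewrite sumT_part; apply: eq_bigr => X XP.
under eq_bigr => x xX do rewrite (def_pblock triv_P XP xX).
rewrite sum_nat_const -big_distrr /=; congr (_ * _)%N.
rewrite sumT_part [RHS]big_mkcondr /=; apply: eq_bigr => Y YP.
under eq_bigr => y yY do rewrite (def_pblock triv_P YP yY).
by rewrite sum_nat_const; case: (Q X Y); rewrite ?muln1 ?muln0.
Qed.

Hypothesis Hcov : (1 - eps) * (#|T| ^ 2)%:R <=
    #|[set p : T * T | [exists X in P, exists Y in P,
          [&& eps_regular_pair eps G X Y, p.1 \in X & p.2 \in Y]]]|%:R.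

Lemma irr_bound :
  \sum_(X in P) \sum_(Y in P | ~~ reg X Y) (#|X| * #|Y|)%:R <= eps * (#|T| ^ 2)%:R.
Proof.
have -> : \sum_(X in P) \sum_(Y in P | ~~ reg X Y) (#|X| * #|Y|)%:R =
    (#|[set p : T * T | ~~ reg (pblock P p.1) (pblock P p.2)]|%:R : R).
  rewrite (pair_count (fun X Y => ~~ reg X Y)) natr_sum; apply: eq_bigr => X _.
  by rewrite natr_sum.
set Creg := [set p : T * T | reg (pblock P p.1) (pblock P p.2)].
have -> : [set p : T * T | ~~ reg (pblock P p.1) (pblock P p.2)] = ~: Creg.
  by apply/setP => p; rewrite !inE.
have hC := cardsC Creg; rewrite card_prod in hC.
have hcov := Hcov; set Cov := [set p : T * T | _] in hcov.
have sub : Cov \subset Creg.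
  apply/subsetP => p; rewrite !inE => /existsP [X /andP [XP /existsP [Y /andP [YP /and3P [hr h1 h2]]]]].
  by rewrite (def_pblock triv_P XP h1) (def_pblock triv_P YP h2).
have le := subset_leq_card sub.
have e : (#|Creg| + #|~: Creg|)%:R = (#|T| ^ 2)%:R :> R by rewrite hC expnS expn1.
rewrite natrD in e.
have le' : #|Cov|%:R <= #|Creg|%:R :> R by rewrite ler_nat.
move: hcov e le'; lra.
Qed.

Lemma CS (a : {set T} -> R) :
  (\sum_(X in P) a X) ^+ 2 <= #|P|%:R * \sum_(X in P) a X ^+ 2.
Proof.
set S := \sum_(X in P) a X; set Q := \sum_(X in P) a X ^+ 2.
have h : 0 <= \sum_(X in P) \sum_(Y in P) (a X - a Y) ^+ 2.
  by apply: sumr_ge0 => X _; apply: sumr_ge0 => Y _; apply: sqr_ge0.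
have e1 X : \sum_(Y in P) (a X - a Y) ^+ 2 = a X ^+ 2 *+ #|P| + Q - 2 * (a X * S).
  rewrite (eq_bigr (fun Y => a X ^+ 2 + a Y ^+ 2 - 2 * (a X * a Y))); last first.
    by move=> Y _; rewrite sqrrB mulr2n mulrA; ring.
  by rewrite sumrB big_split /= sumr_const -!mulr_sumr.
rewrite (eq_bigr _ (fun X _ => e1 X)) in h.
rewrite sumrB big_split /= in h.
rewrite sumr_const sumrMnl in h.
rewrite -mulr_sumr in h.
rewrite -mulr_suml in h.
rewrite -[Q *+ _]mulr_natl in h.
rewrite /S /Q in h *; move: h.
move: (\sum_(i in P) a i) (\sum_(i in P) a i ^+ 2) (#|P|%:R : R) => x y z.
rewrite expr2; lra.
Qed.

Lemma core : m%:R <= 16 * #|P|%:R :> R.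
Proof.
have hA0 X : 0 <= hA X by apply: sumr_ge0 => i _; apply: ler0n.
have hAX X : hA X <= #|X|%:R.
  apply: (@le_trans _ _ (\sum_(i : 'I_m) w X (inl i))).
    rewrite /hA big_mkcond /=; apply: ler_sum => i _; case: ifP => _ //.
  by rewrite /w -natr_sum ler_nat; exact: sumA_le.
have hAI X : hA X <= #|IX X|%:R * n%:R.
  rewrite mulr_natl -sumr_const; apply: ler_sum => i _.
  by rewrite /w ler_nat -(fib_card (inl i)); apply: subset_leq_card; apply: subsetIr.
have Ssum : m%:R * (n%:R / 2) <= \sum_(X in P) hA X.
  rewrite /hA (exchange_big_dep xpredT) //=.
  apply: (@le_trans _ _ (\sum_(i : 'I_m) (n%:R / 2 : R))).
    by rewrite sumr_const card_ord mulr_natl.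
  apply: ler_sum => i _.
  have -> : \sum_(X | (X \in P) && (i \in IX X)) w X (inl i) =
      \sum_(X in P | heavy X (inl i)) w X (inl i).
    by apply: eq_bigl => X; rewrite inE.
  exact: heavy_mass.
have Sle : \sum_(X in P) hA X <= #|T|%:R.
  rewrite -cardsT (card_partition Hpart) natr_sum; apply: ler_sum => X _; exact: hAX.
have key X : X \in P -> (hA X ^+ 2 - n%:R * hA X) / 2 <=
    \sum_(Y in P | ~~ reg X Y) (#|X| * #|Y|)%:R.
  move=> XP; have hp := perX X XP.
  have -> : \sum_(Y in P | ~~ reg X Y) ((#|X| * #|Y|)%:R : R) =
      #|X|%:R * \sum_(Y in P | ~~ reg X Y) (#|Y|%:R : R).
    by rewrite mulr_sumr; apply: eq_bigr => Y _; rewrite natrM.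
  have s0 : 0 <= \sum_(Y in P | ~~ reg X Y) (#|Y|%:R : R).
    by apply: sumr_ge0 => Y _; apply: ler0n.
  move: hp s0 (hA0 X) (hAX X) (hAI X) (ler0n R n).
  move: (\sum_(Y in P | ~~ reg X Y) (#|Y|%:R : R)) (hA X) (#|X|%:R : R) (#|IX X|%:R : R) (n%:R : R).
  move=> s a x c nn hp s0 a0 ax ac n0.
  have p1 : 0 <= a * (s - (c - 1) * (nn / 2)) by apply: mulr_ge0 => //; lra.
  have p2 : 0 <= s * (x - a) by apply: mulr_ge0 => //; lra.
  have p3 : 0 <= a * (c * nn - a) by apply: mulr_ge0 => //; lra.
  lra.
have sumkey : \sum_(X in P) (hA X ^+ 2 - n%:R * hA X) / 2 <= eps * (#|T| ^ 2)%:R.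
  apply: le_trans irr_bound; apply: ler_sum => X XP; exact: key X XP.
have Q := CS hA.
rewrite -mulr_suml sumrB -mulr_sumr in sumkey.
have eN : eps * (#|T| ^ 2)%:R = m%:R * n%:R ^+ 2.
  rewrite card_T natrX !natrM.
  transitivity (eps * (4 * m%:R) * (m%:R * n%:R ^+ 2)); last by rewrite eps_m mul1r.
  by ring.
have eT : #|T|%:R = 2 * m%:R * n%:R :> R by rewrite card_T !natrM.
rewrite eN in sumkey; rewrite eT in Sle.
have m0 : 0 < m%:R :> R.
  rewrite ltr0n lt0n; apply/eqP => m0; move: eps_m; rewrite m0 mulr0n mulr0 => e.
  move: e; rewrite mulr0 => e; move: (@oner_neq0 R); by rewrite -e eqxx.
have n0 : 0 < n%:R :> R by rewrite ltr0n.
have k0 : 0 <= #|P|%:R :> R by apply: ler0n.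
move: Ssum Sle sumkey Q m0 n0 k0.
move: (\sum_(X in P) hA X) (\sum_(X in P) hA X ^+ 2) (#|P|%:R : R) (m%:R : R) (n%:R : R).
move=> S Qs k mm nn Ssum Sle sumkey Q m0 n0 k0.
have S0 : 0 <= mm * (nn / 2) by apply: mulr_ge0; lra.
have h1 := ler_pM S0 S0 Ssum Ssum.
have h2 : nn * S <= nn * (2 * mm * nn) by apply: ler_wpM2l; lra.
have h3 : k * Qs <= k * (4 * mm * nn ^+ 2) by apply: ler_wpM2l => //; lra.
have h4 : mm * nn ^+ 2 * (mm - 16 * k) <= 0 by rewrite expr2 in Q h3 *; lra.
rewrite pmulr_rle0 in h4; first by lra.
by apply: mulr_gt0 => //; apply: exprn_gt0.
Qed.

End Core.

Theorem lemma3p31 (R : realType) (s1 s2 : R) :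
  0 < s1 -> s1 < 1 - s1 -> 1 - s1 < s2 -> s2 < 1 ->
  exists eps0 : R, 0 < eps0 /\
    forall (eps : R) (m : nat), 0 < eps -> eps < eps0 -> eps^-1 / 4 = m%:R ->
    exists n0 : nat, forall n : nat, (n0 <= n)%N ->
      forall H : rel (irr_vertex m), in_Irr H ->
      forall (T : finType) (G : rel T) (f : T -> irr_vertex m),
        is_graph G -> is_blowup n H G f ->
        forall P : {set {set T}}, eps_regular_partition eps G P ->
          powR eps (- s2) <= #|P|%:R.
Proof.
move=> s1p s1s s2a s2b.
have r0 : 0 < 1 - s2 by lra.
exists (Num.min (1/4) (powR (1/64) (1 - s2)^-1)); split.
  rewrite lt_min; apply/andP; split; first lra.
  by apply: powR_gt0; lra.
move=> eps m e0; rewrite lt_min => /andP [e14 ep] em.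
exists 1%N => n n1 H HI T G f Gg Hb P [Hpart Hcov].
have eps_m : eps * (4 * m%:R) = 1.
  by rewrite -em; field; rewrite gt_eqF.
have hk := @core R m n T H G f P eps e0 ltac:(lra) eps_m n1 HI Hb Hpart Hcov.
have einv : eps^-1 = 4 * m%:R by rewrite -em; lra.
have -> : - s2 = (1 - s2) + (-1) by ring.
rewrite powRD; last by apply/implyP => _; rewrite gt_eqF.
rewrite powR_inv1 ?(ltW e0) // einv.
have hr : powR eps (1 - s2) <= 1/64.
  apply: (@le_trans _ _ (powR (powR (1/64) (1 - s2)^-1) (1 - s2))).
    apply: ge0_ler_powR; rewrite ?nnegrE ?(ltW r0) ?(ltW e0) ?powR_ge0 //.
    exact: ltW.
  rewrite -powRrM mulVf ?powRr1 //; first lra.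
  by rewrite gt_eqF.
have m0 : 0 <= 4 * m%:R :> R by apply: mulr_ge0 => //; apply: ler0n.
have := ler_wpM2r m0 hr.
move: hk; move: (powR eps (1 - s2)) (m%:R : R) (#|P|%:R : R) => a b c; lra.
Qed.
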